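(* Let $\mathcal{L}=(L,\wedge,\vee,0,1)$ be a complete lattice. If $p\in L$ is strongly irreducible in $L$, then $p$ is weakly $\wedge$-distributive in $L$.
   Context: $p$ is strongly irreducible if for all $a,b\in L$: $a\wedge b\leq p$ implies $a\leq p$ or $b\leq p$. $p$ is weakly $\wedge$-distributive if whenever $x,y\in L$ satisfy $x\wedge y=0$, one has $p=(x\vee p)\wedge(y\vee p)$. *)

(* Defs.v *)
From mathcomp Require Import all_boot all_order.
Set Implicit Arguments. Unset Strict Implicit. Unset Printing Implicit Defensive.
Import Order.TTheory.
Local Open Scope order_scope.

Definition complete_lattice {d} (L : tbLatticeType d) : Prop :=
  forall A : L -> Prop, exists s : L,
    (forall a, A a -> a <= s) /\ (forall u, (forall a, A a -> a <= u) -> s <= u).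

Definition strongly_irreducible {d} (L : tbLatticeType d) (p : L) : Prop :=
  forall a b : L, a `&` b <= p -> a <= p \/ b <= p.

Definition weakly_meet_distributive {d} (L : tbLatticeType d) (p : L) : Prop :=
  forall x y : L, x `&` y = \bot -> p = (x `|` p) `&` (y `|` p).

(* Main.v *)
Require Import Defs.
From mathcomp Require Import all_boot all_order.
Import Order.TTheory.
Local Open Scope order_scope.

Theorem lemma1p10 (d : Order.disp_t) (L : tbLatticeType d) (p : L) :
  complete_lattice L -> strongly_irreducible p -> weakly_meet_distributive p.
Proof.
move=> _ Hs x y Hxy.
have := Hs x y; rewrite Hxy le0x => /(_ isT) [H|H].
- rewrite (join_idPr H) meetC; apply/esym/meet_idPr; exact: leUr.
- rewrite (join_idPr H); apply/esym/meet_idPr; exact: leUr.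
Qed.
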